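(* Let $d\ge1$ be an integer and $0<\lambda<1$. Let $\mathbf{v}^+(\cdot)$ and $\mathbf{v}^-(\cdot)$ be solutions of the differential system \[\frac{d}{dt}v_k(t)=\lambda(v_{k-1}(t)-v_k(t))-(1-v_{k+1}(t))^d+(1-v_{k}(t))^d,\qquad k=1,2,\dots,\] (with zeroth coordinate identically $1$) with respective initial conditions $\mathbf{v}^+(0),\mathbf{v}^-(0)\in U$ such that $v^+_k(0)\ge v^-_k(0)$ for all $k$. Then $v^+_k(t)\ge v^-_k(t)$ for all $k$ and all $t>0$.
   Context: $U$ is the set of sequences $\mathbf{u}=\{u_k\}_{k\ge0}$ with $1=u_0\ge u_1\ge u_2\ge\cdots\ge 0$. *)

(* Defs.v *)
From Stdlib Require Import Reals.
From Coquelicot Require Import Coquelicot.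
Open Scope R_scope.

Definition inU (u : nat -> R) : Prop :=
  u 0%nat = 1 /\ (forall k : nat, u (S k) <= u k) /\ (forall k : nat, 0 <= u k).

Definition rhs (d : nat) (lam : R) (u : nat -> R) (k : nat) : R :=
  lam * (u (k - 1)%nat - u k) - (1 - u (S k)) ^ d + (1 - u k) ^ d.

Definition is_solution (d : nat) (lam : R) (v : R -> nat -> R) : Prop :=
  (forall t : R, 0 <= t -> v t 0%nat = 1) /\
  (forall t : R, 0 <= t -> inU (v t)) /\
  (forall (k : nat) (t : R), (1 <= k)%nat -> 0 < t ->
      derivable_pt_lim (fun s => v s k) t (rhs d lam (v t) k)) /\
  (forall k : nat, filterlim (fun s => v s k) (at_right 0) (locally (v 0 k))).

(* Main.v *)
Require Import Defs.
From Stdlib Require Import Reals.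
From Coquelicot Require Import Coquelicot.
From Stdlib Require Import Lra Lia.
Open Scope R_scope.
Definition RC (f : R -> R) (a : R) := forall eps, 0 < eps -> exists del, 0 < del /\ forall y, a < y < a + del -> Rabs (f y - f a) < eps.

Lemma RC_of_filterlim f a : filterlim f (at_right a) (locally (f a)) -> RC f a.
Proof.
  intros H eps He. apply filterlim_locally with (eps := mkposreal eps He) in H.
  destruct H as [del Hd]. exists del. split. apply cond_pos.
  intros y Hy. specialize (Hd y). simpl in Hd.
  unfold ball in Hd; simpl in Hd. unfold AbsRing_ball, abs, minus, plus, opp in Hd; simpl in Hd.
  apply Hd; [|lra]. rewrite Rabs_right; lra.
Qed.
Lemma RC_of_der f a l : derivable_pt_lim f a l -> RC f a.
Proof.
  intros H. assert (C : continuity_pt f a) by (apply derivable_continuous_pt; exists l; exact H).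
  intros eps He. destruct (C eps He) as [del [Hd Hx]]. exists del. split; auto.
  intros y Hy. apply (Hx y). split. split. exact I. lra. simpl. unfold R_dist. rewrite Rabs_right; lra.
Qed.
Lemma powdiff d x y : 0 <= y <= x -> x <= 1 -> 0 <= x^d - y^d <= INR d * (x - y).
Proof.
  intros Hy Hx. induction d as [|d IH].
  - simpl; lra.
  - rewrite S_INR. simpl.
    assert (0 <= y^d <= 1).
    { split; [apply pow_le; lra|]. rewrite <- (pow1 d). apply pow_incr; lra. }
    assert (0 <= y ^d) by lra.
    assert (y^d <= x^d) by (apply pow_incr; lra).
    split. nra. nra.
Qed.
Lemma powbound d x y B : 0 <= x <= 1 -> 0 <= y <= 1 -> x - y <= B -> 0 <= B ->
  x^d - y^d <= INR d * B /\ INR d * (x - y) + y^d - x^d <= INR d * B.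
Proof.
  intros. pose proof (pos_INR d).
  destruct (Rle_dec y x).
  - pose proof (powdiff d x y ltac:(lra) ltac:(lra)). nra.
  - pose proof (powdiff d y x ltac:(lra) ltac:(lra)). nra.
Qed.
Lemma inU_le1 u : inU u -> forall j, 0 <= u j <= 1.
Proof.
  intros [H0 [Hd Hn]] j. split; auto. induction j. lra. specialize (Hd j). lra.
Qed.
Lemma rhsbound d lam u p k B : inU u -> inU p -> 0 < lam -> 0 <= B ->
  (forall j, u j - p j <= B) ->
  rhs d lam u k - rhs d lam p k + (lam + INR d)*(u k - p k) <= (lam + 2*INR d)*B.
Proof.
  intros Hu Hp Hl HB Hj. unfold rhs.
  pose proof (inU_le1 u Hu) as U. pose proof (inU_le1 p Hp) as P.
  destruct (powbound d (1 - p (S k)) (1 - u (S k)) B) as [A1 _];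
    [ specialize (U (S k)); specialize (P (S k)); lra .. | specialize (Hj (S k)); lra | lra | ].
  destruct (powbound d (1 - p k) (1 - u k) B) as [_ A2];
    [ specialize (U k); specialize (P k); lra .. | specialize (Hj k); lra | lra | ].
  specialize (Hj (k-1)%nat). nra.
Qed.
Lemma dexp M c : derivable_pt_lim (fun x => exp (M*x)) c (M * exp (M*c)).
Proof. apply is_derive_Reals. auto_derive; auto. ring. Qed.
Lemma dprod M (g : R -> R) c l : derivable_pt_lim g c l ->
  derivable_pt_lim (fun x => exp (M*x) * g x) c (M * exp (M*c) * g c + exp (M*c) * l).
Proof. intros H. exact (derivable_pt_lim_mult _ _ _ _ _ (dexp M c) H). Qed.
Lemma dminus (f g : R -> R) c l1 l2 : derivable_pt_lim f c l1 -> derivable_pt_lim g c l2 ->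
  derivable_pt_lim (fun x => f x - g x) c (l1 - l2).
Proof. intros H1 H2. exact (derivable_pt_lim_minus _ _ _ _ _ H1 H2). Qed.
Lemma exp_le_exp' x y : x <= y -> exp x <= exp y.
Proof. intros [H|H]. left; apply exp_increasing; auto. subst; lra. Qed.
Lemma step d lam (vm vp : R -> nat -> R) a h B :
  0 < lam -> 0 <= a -> 0 < h -> (lam + 2*INR d)*h <= 1/2 -> 0 <= B ->
  (forall s, 0 <= s -> inU (vm s)) -> (forall s, 0 <= s -> inU (vp s)) ->
  (forall k t, (1<=k)%nat -> 0<t -> derivable_pt_lim (fun s => vm s k) t (rhs d lam (vm t) k)) ->
  (forall k t, (1<=k)%nat -> 0<t -> derivable_pt_lim (fun s => vp s k) t (rhs d lam (vp t) k)) ->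
  (forall k, RC (fun s => vm s k - vp s k) a) ->
  (forall k, vm a k - vp a k <= 0) ->
  (forall s k, a < s <= a+h -> vm s k - vp s k <= B) ->
  forall s k, a < s <= a+h -> vm s k - vp s k <= B/2.
Proof.
  intros Hl Ha Hh HC HB Um Up Dm Dp Hrc Ha0 Hbd s k Hs.
  destruct k as [|k].
  { destruct (Um s ltac:(lra)) as [E1 _]. destruct (Up s ltac:(lra)) as [E2 _]. lra. }
  destruct (Rle_dec (vm s (S k) - vp s (S k)) (B/2)) as [|Hn]; auto.
  exfalso. set (eps := vm s (S k) - vp s (S k) - B/2).
  destruct (Hrc (S k) eps ltac:(unfold eps; lra)) as [del [Hdel Hd]].
  set (a' := a + Rmin del (s - a) / 2).
  assert (Hm1 : 0 < Rmin del (s-a)) by (apply Rmin_glb_lt; lra).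
  assert (Hm2 : Rmin del (s-a) <= del) by apply Rmin_l.
  assert (Hm3 : Rmin del (s-a) <= s - a) by apply Rmin_r.
  assert (Ha' : a < a' < s) by (unfold a'; lra).
  specialize (Hd a' ltac:(unfold a'; lra)). simpl in Hd.
  specialize (Ha0 (S k)).
  assert (Hwa : vm a' (S k) - vp a' (S k) < eps).
  { apply Rabs_def2 in Hd. lra. }
  set (M := lam + INR d). pose proof (pos_INR d).
  destruct (MVT_cor2 (fun x => exp (M*x) * (vm x (S k) - vp x (S k)))
     (fun x => M * exp (M*x) * (vm x (S k) - vp x (S k)) + exp (M*x) * (rhs d lam (vm x) (S k) - rhs d lam (vp x) (S k)))
     a' s ltac:(lra)) as [c [Hcr Hc]].
  { intros c Hc. apply (dprod M (fun x => vm x (S k) - vp x (S k))). apply dminus; [apply Dm | apply Dp]; lia || lra. }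
  assert (Hrb := rhsbound d lam (vm c) (vp c) (S k) B (Um c ltac:(lra)) (Up c ltac:(lra)) Hl HB
       (fun j => Hbd c j ltac:(lra))).
  fold M in Hrb.
  assert (Ec : 0 < exp (M*c)) by apply exp_pos.
  assert (Ecs : exp (M*c) <= exp (M*s)) by (apply exp_le_exp'; unfold M; nra).
  assert (Eas : exp (M*a') <= exp (M*s)) by (apply exp_le_exp'; unfold M; nra).
  assert (Ea : 0 < exp (M*a')) by apply exp_pos.
  set (wc := vm c (S k) - vp c (S k)) in *.
  set (ws := vm s (S k) - vp s (S k)) in *.
  set (wa := vm a' (S k) - vp a' (S k)) in *.
  set (Dc := rhs d lam (vm c) (S k) - rhs d lam (vp c) (S k)) in *.
  assert (T1 : M * exp (M * c) * wc + exp (M * c) * Dc <= exp (M*s) * ((lam + 2 * INR d) * B)).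
  { assert (M * exp (M * c) * wc + exp (M * c) * Dc = exp (M*c) * (Dc + M*wc)) by ring.
    assert (0 <= (lam + 2 * INR d) * B) by nra. nra. }
  assert (T2 : exp (M*a') * wa < exp (M*s) * eps).
  { destruct (Rle_dec 0 wa). nra. assert (0 < eps) by (unfold eps; lra). nra. }
  assert (T3 : (lam + 2 * INR d) * B * (s - a') <= B/2).
  { assert (X: (lam+2*INR d)*(s-a') <= 1/2).
    { apply Rle_trans with ((lam+2*INR d)*h); [apply Rmult_le_compat_l; lra | lra]. }
    replace ((lam + 2 * INR d) * B * (s - a')) with (((lam+2*INR d)*(s-a'))*B) by ring. nra. }
  assert (T4 : exp (M*s) * ws < exp (M*s) * eps + exp (M*s) * (B/2)).
  { cbv beta in Hcr. fold wc ws wa Dc in Hcr.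
    assert (exp (M * s) * ws - exp (M * a') * wa <= exp (M*s) * ((lam + 2 * INR d) * B) * (s - a')).
    { rewrite Hcr. apply Rmult_le_compat_r. lra. exact T1. }
    assert (exp (M*s) * ((lam + 2 * INR d) * B) * (s - a') <= exp (M*s) * (B/2)).
    { rewrite Rmult_assoc. apply Rmult_le_compat_l. lra. exact T3. }
    lra. }
  assert (ws < eps + B/2).
  { apply (Rmult_lt_reg_l (exp (M*s))). apply exp_pos. lra. }
  unfold eps in *. fold ws in H0. lra.
Qed.
Lemma half_pow_zero x : (forall n, x <= 2 * (1/2)^n) -> x <= 0.
Proof.
  intros H. destruct (Rle_dec x 0) as [|Hn]; auto. exfalso.
  destruct (pow_lt_1_zero (1/2) ltac:(rewrite Rabs_right; lra) (x/2) ltac:(lra)) as [N HN].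
  specialize (HN N (le_n N)). specialize (H N).
  pose proof (Rle_abs ((1/2)^N)). lra.
Qed.

Lemma zero_on d lam (vm vp : R -> nat -> R) a h :
  0 < lam -> 0 <= a -> 0 < h -> (lam + 2*INR d)*h <= 1/2 ->
  (forall s, 0 <= s -> inU (vm s)) -> (forall s, 0 <= s -> inU (vp s)) ->
  (forall k t, (1<=k)%nat -> 0<t -> derivable_pt_lim (fun s => vm s k) t (rhs d lam (vm t) k)) ->
  (forall k t, (1<=k)%nat -> 0<t -> derivable_pt_lim (fun s => vp s k) t (rhs d lam (vp t) k)) ->
  (forall k, RC (fun s => vm s k - vp s k) a) ->
  (forall k, vm a k - vp a k <= 0) ->
  forall s k, a < s <= a+h -> vm s k - vp s k <= 0.
Proof.
  intros Hl Ha Hh HC Um Up Dm Dp Hrc Ha0 s k Hs.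
  apply half_pow_zero. intro n. revert s k Hs. induction n as [|n IH]; intros s k Hs.
  - pose proof (inU_le1 _ (Um s ltac:(lra)) k). pose proof (inU_le1 _ (Up s ltac:(lra)) k). simpl; lra.
  - replace (2 * (1/2)^(S n)) with ((2 * (1/2)^n)/2) by (simpl; field).
    assert (0 < (1/2)^n) by (apply pow_lt; lra).
    apply (step d lam vm vp a h); auto; lra.

Qed.

Lemma RC_minus f g a : RC f a -> RC g a -> RC (fun s => f s - g s) a.
Proof.
  intros Hf Hg eps He.
  destruct (Hf (eps/2) ltac:(lra)) as [d1 [H1 F1]].
  destruct (Hg (eps/2) ltac:(lra)) as [d2 [H2 G2]].
  exists (Rmin d1 d2). split. apply Rmin_glb_lt; lra.
  intros y Hy. pose proof (Rmin_l d1 d2). pose proof (Rmin_r d1 d2).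
  specialize (F1 y ltac:(lra)). specialize (G2 y ltac:(lra)).
  apply Rabs_def2 in F1. apply Rabs_def2 in G2. apply Rabs_def1; lra.
Qed.

Theorem lemma3p2 (d : nat) (lam : R) (vp vm : R -> nat -> R) :
  (1 <= d)%nat -> 0 < lam -> lam < 1 ->
  is_solution d lam vp -> is_solution d lam vm ->
  inU (vp 0) -> inU (vm 0) ->
  (forall k : nat, vm 0 k <= vp 0 k) ->
  forall (t : R), 0 < t -> forall k : nat, vm t k <= vp t k.
Proof.
  intros Hd Hl Hl1 [P0 [PU [PD PL]]] [M0 [MU [MD ML]]] _ _ H0.
  pose proof (pos_INR d) as Hdpos.
  set (C := lam + 2 * INR d).
  assert (HCp : 0 < C) by (unfold C; lra).
  set (h := 1 / (2 * C)).
  assert (Hh : 0 < h) by (unfold h; apply Rdiv_lt_0_compat; lra).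
  assert (HC : C * h <= 1/2) by (unfold h; right; field; lra).
  assert (Ind : forall n : nat, forall s, 0 <= s <= INR n * h -> forall k, vm s k - vp s k <= 0).
  { induction n as [|n IH]; intros s Hs k.
    - simpl in Hs. replace s with 0 by lra. specialize (H0 k). lra.
    - destruct (Rle_dec s (INR n * h)) as [Hle|Hgt].
      + apply IH. lra.
      + rewrite S_INR in Hs. pose proof (pos_INR n).
        apply (zero_on d lam vm vp (INR n * h) h); auto; try nra.
        * intros k'. destruct n as [|n].
          -- simpl. replace (0 * h) with 0 by ring.
             apply RC_minus; apply RC_of_filterlim; auto.
          -- destruct k' as [|k'].
             ++ intros eps He. exists 1. split. lra. intros y Hy.
                assert (0 < INR (S n) * h) by (apply Rmult_lt_0_compat; [apply lt_0_INR; lia | lra]).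
                rewrite (M0 y), (P0 y), (M0 (INR (S n) * h)), (P0 (INR (S n) * h)); try lra.
                replace (1-1-(1-1)) with 0 by ring. rewrite Rabs_R0. lra.
             ++ assert (0 < INR (S n) * h) by (apply Rmult_lt_0_compat; [apply lt_0_INR; lia | lra]).
                apply RC_minus; eapply RC_of_der; [apply MD | apply PD]; auto; lia.
        * intros k'. apply IH. split; [apply Rmult_le_pos; [apply pos_INR | lra] | lra].
      }
  intros t Ht k.
  destruct (INR_unbounded (t / h)) as [n Hn].
  assert (t <= INR n * h).
  { apply Rmult_gt_compat_r with (r := h) in Hn; auto.
    unfold Rdiv in Hn. rewrite Rmult_assoc, Rinv_l in Hn; lra. }
  specialize (Ind n t ltac:(lra) k). lra.
Qed.
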